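(* Let $\theta$ be a random variable with a continuous distribution, let $u(q,\theta)$ be a utility function, monotone increasing in $q$, with $\partial^2u(q,\theta)/\partial q^2=-1/d$ for all $(q,\theta)$, where $d>0$, and let the penalty be a quadratic function $\phi$ with $\phi(0)=\phi'(0)=0$, symmetric, and $\phi''(x)=1/\lambda$ for all $x$, where $\lambda>0$. Let $\pi_0>0$, $\pi_2>0$, $p\in(0,1)$. Define $q^a(\theta)=\arg\min_q\{\pi_0 q-u(q,\theta)\}$, $q^b(f,\theta)=\arg\min_q\{\pi_0 q-u(q,\theta)+\phi(f-q)\}$, $q^c(\theta)=\arg\min_q\{\pi_0 q-u(q,\theta)-\pi_2(f-q)\}$, $$H(f)=p\,\mathbb{E}_\theta[\pi_0 q^c-u(q^c,\theta)-\pi_2(f-q^c)]+(1-p)\,\mathbb{E}_\theta[\pi_0 q^b-u(q^b,\theta)+\phi(f-q^b)],$$ and let $f^*$ be the minimizer of $H$. Then the expected inflation of the baseline report is $$\mathbb{E}_\theta\,\delta f^*(p)=f^*-\mathbb{E}_\theta q^a(\theta)=(d+\lambda)\frac{p\,\pi_2}{1-p}.$$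
   Context: A consumer in a demand response program self-reports baseline $f$; with probability $p$ it is called and paid $\pi_2$ per unit of reduction $f-q$, otherwise it pays penalty $\phi(f-q)$. $\pi_0$ is the retail price; $q^a(\theta)$ is the consumption when not participating (the true baseline), and $\delta f^*(\theta)=f^*-q^a(\theta)$ is the baseline inflation. *)

(* Defs.v *)
From HB Require Import structures.
From mathcomp Require Import all_boot all_order all_algebra.
From mathcomp Require Import all_classical all_reals all_analysis.
Set Implicit Arguments. Unset Strict Implicit. Unset Printing Implicit Defensive.
Import Order.TTheory GRing.Theory Num.Theory.
Local Open Scope ring_scope.

Definition is_argmin (R : realType) (g : R -> R) (x : R) : Prop :=
  forall y, g x <= g y.

Definition Hobj (R : realType) (d0 : measure_display) (T : measurableType d0)
  (P : probability T R) (theta : T -> R) (u : R -> R -> R) (phi : R -> R)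
  (pi0 pi2 p : R) (qb qc : R -> R -> R) (f : R) : R :=
  p * Rintegral P setT (fun w => let th := theta w in let q := qc f th in
        pi0 * q - u q th - pi2 * (f - q))
  + (1 - p) * Rintegral P setT (fun w => let th := theta w in let q := qb f th in
        pi0 * q - u q th + phi (f - q)).

(* Main.v *)
Require Import Defs.
From HB Require Import structures.
From mathcomp Require Import all_boot all_order all_algebra.
From mathcomp Require Import all_classical all_reals all_analysis.
Import Order.TTheory GRing.Theory Num.Theory.
Local Open Scope ring_scope.
Local Open Scope classical_set_scope.
From mathcomp Require Import ring lra.

Section S.
Context {R : realType}.
Import numFieldNormedType.Exports.

Lemma deriv0_cst (f : R -> R) : (forall x : R, is_derive x 1 f 0) -> forall x y, f x = f y.
Proof.
move=> H.
have cf : continuous f.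
  move=> x; apply: (@differentiable_continuous _ _ _ x f); apply/derivable1_diffP.
  by have [] := H x.
suff key : forall x y, x <= y -> f x = f y.
  move=> x y; case: (lerP x y) => xy; first exact: key.
  by rewrite (key y x (ltW xy)).
move=> x y xy.
have [c _ E] := @MVT_segment R f (fun _ => 0) x y xy (fun z _ => H z)
  (continuous_subspaceT cf).
by move/eqP: E; rewrite mul0r subr_eq0 => /eqP ->.
Qed.

Lemma quad (g : R -> R) (c : R) : (forall x, derivable g x 1) ->
  (forall x, derivable g^`() x 1) -> (forall x, g^`()^`() x = c) ->
  forall x, g x = g 0 + derive1 g 0 * x + c / 2 * x ^+ 2.
Proof.
move=> d1 d2 d3.
have Dg (x : R) : is_derive x 1 g (g^`() x).
  by rewrite derive1E; apply: derivableP.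
have Dg' (x : R) : is_derive x 1 g^`() c.
  by rewrite -(d3 x) derive1E; apply: derivableP.
have Hh : forall x : R, is_derive x 1 (fun x => derive1 g x - c * x) 0.
  move=> x.
  have -> : (0:R) = c - c * 1 by rewrite mulr1 subrr.
  apply: is_deriveB.
have Hh0 := deriv0_cst _ Hh.
have Hk : forall x : R, is_derive x 1 (fun x => g x - derive1 g 0 * x - c / 2 * (x * x)) 0.
  move=> x.
  apply: is_derive_eq.
  have E := Hh0 x 0; rewrite mulr0 subr0 in E.
  have -> : derive1 g x = derive1 g 0 + c * x by rewrite -E; ring.
  rewrite /GRing.scale /=; by field.
move=> x; have := deriv0_cst _ Hk x 0.
rewrite !mulr0 !subr0 => E.
by rewrite expr2 -[LHS]subr0 -(subr0 (g 0)) -E; ring.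
Qed.

Lemma argmin_quad (k a b x0 x : R) (F : R -> R) : 0 < k -> 2 * k * x0 + a = 0 ->
  (forall q, F q = k * q ^+ 2 + a * q + b) -> (forall y, F x <= F y) -> x = x0.
Proof.
move=> k0 hx0 FE H.
have := H x0; rewrite !FE => h.
have ha : a = -(2*k*x0) by apply/eqP; rewrite -subr_eq0 opprK addrC hx0.
have h2 : k * (x - x0) ^+ 2 <= 0.
  rewrite ha in h; nra.
have : (x - x0) ^+ 2 <= 0.
  by rewrite -(pmulr_rle0 _ k0).
rewrite le_eqVlt ltNge sqr_ge0 orbF sqrf_eq0 subr_eq0 => /eqP //.
Qed.
End S.

Theorem theorem3 (R : realType) (d0 : measure_display) (T : measurableType d0)
  (P : probability T R) (theta : T -> R) (u : R -> R -> R) (phi : R -> R)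
  (d lam pi0 pi2 p : R) (qa : R -> R) (qb qc : R -> R -> R) (fstar : R) :
  (* theta is a real random variable with a continuous (atomless) distribution *)
  measurable_fun setT theta ->
  (forall x : R, P (theta @^-1` [set x]) = 0%E) ->
  (* parameters *)
  0 < d -> 0 < lam -> 0 < pi0 -> 0 < pi2 -> 0 < p -> p < 1 ->
  (* u(q, th): twice differentiable in q with d^2u/dq^2 = -1/d *)
  (forall th q, derivable (fun x => u x th) q 1) ->
  (forall th q, derivable (fun x => u x th)^`() q 1) ->
  (forall th q, ((fun x => u x th)^`())^`() q = - d^-1) ->
  (* penalty phi: phi(0) = phi'(0) = 0, symmetric, phi'' = 1/lam *)
  (forall x, derivable phi x 1) ->
  (forall x, derivable phi^`() x 1) ->
  (forall x, (phi^`())^`() x = lam^-1) ->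
  phi 0 = 0 -> phi^`() 0 = 0 ->
  (forall x, phi (- x) = phi x) ->
  (* the argmins q^a, q^b, q^c *)
  (forall th, is_argmin (fun q => pi0 * q - u q th) (qa th)) ->
  (forall f th, is_argmin (fun q => pi0 * q - u q th + phi (f - q)) (qb f th)) ->
  (forall f th, is_argmin (fun q => pi0 * q - u q th - pi2 * (f - q)) (qc f th)) ->
  (* the expectations involved are finite *)
  P.-integrable setT (fun w => (qa (theta w))%:E) ->
  (forall f, P.-integrable setT (fun w => (let th := theta w in let q := qc f th in
        pi0 * q - u q th - pi2 * (f - q))%:E)) ->
  (forall f, P.-integrable setT (fun w => (let th := theta w in let q := qb f th in
        pi0 * q - u q th + phi (f - q))%:E)) ->
  (* fstar minimizes H *)
  (forall f, Hobj P theta u phi pi0 pi2 p qb qc fstar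
             <= Hobj P theta u phi pi0 pi2 p qb qc f) ->
  fstar - Rintegral P setT (fun w => qa (theta w)) = (d + lam) * (p * pi2 / (1 - p)).
Proof.
move=> mth atom d0' lam0 pi00 pi20 p0 p1 du1 du2 du3 dp1 dp2 dp3 phi0 dphi0 phisym
  Ha Hb Hc ia ic ib Hmin.
have dn : d != 0 by rewrite gt_eqF.
have ln : lam != 0 by rewrite gt_eqF.
have Kn : d + lam != 0 by rewrite gt_eqF // addr_gt0.
have pn : 1 - p != 0 by rewrite gt_eqF // subr_gt0.
have [A [B uE]] : exists A B : R -> R, forall th q,
    u q th = A th + B th * q - q ^+ 2 / (2 * d).
  exists (fun th => u 0 th), (fun th => derive1 (fun x => u x th) 0) => th q.
  rewrite (quad (fun x => u x th) (- d^-1) (du1 th) (du2 th) (du3 th) q).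
  by field; rewrite ?dn ?ln ?Kn ?pn.
have phiE : forall x, phi x = x ^+ 2 / (2 * lam).
  move=> x; rewrite (quad phi (lam^-1) dp1 dp2 dp3 x) phi0 dphi0; by field; rewrite ?dn ?ln ?Kn ?pn.
have qaE : forall th, qa th = d * (B th - pi0).
  move=> th; apply: (argmin_quad (1 / (2 * d)) (pi0 - B th) (- A th)
     _ _ _ _ _ _ (Ha th)).
  - by rewrite divr_gt0 // mulr_gt0.
  - by field; rewrite ?dn ?ln ?Kn ?pn.
  - by move=> q; rewrite uE; field; rewrite ?dn ?ln ?Kn ?pn.
have qcE : forall f th, qc f th = d * (B th - pi0 - pi2).
  move=> f th; apply: (argmin_quad (1 / (2 * d)) (pi0 - B th + pi2)
     (- A th - pi2 * f) _ _ _ _ _ _ (Hc f th)).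
  - by rewrite divr_gt0 // mulr_gt0.
  - by field; rewrite ?dn ?ln ?Kn ?pn.
  - by move=> q; rewrite uE; field; rewrite ?dn ?ln ?Kn ?pn.
have qbE : forall f th, qb f th = (lam * d * (B th - pi0) + d * f) / (d + lam).
  move=> f th; apply: (argmin_quad (1 / (2 * d) + 1 / (2 * lam))
     (pi0 - B th - f / lam) (- A th + f ^+ 2 / (2 * lam)) _ _ _ _ _ _ (Hb f th)).
  - by rewrite addr_gt0 // divr_gt0 // mulr_gt0.
  - by field; rewrite ?dn ?ln ?Kn ?pn.
  - by move=> q; rewrite uE phiE; field; rewrite ?dn ?ln ?Kn ?pn.
pose Vc f w := let th := theta w in let q := qc f th in pi0 * q - u q th - pi2 * (f - q).
pose Vb f w := let th := theta w in let q := qb f th in pi0 * q - u q th + phi (f - q).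
pose E := Rintegral P setT (fun w => qa (theta w)).
have HE f : Hobj P theta u phi pi0 pi2 p qb qc f =
   p * Rintegral P setT (Vc f) + (1 - p) * Rintegral P setT (Vb f) by [].
have IcE f : Rintegral P setT (Vc f) = Rintegral P setT (Vc fstar) + (- (pi2 * (f - fstar))).
  transitivity (Rintegral P setT (fun w => Vc fstar w + (- (pi2 * (f - fstar))))).
    by apply: eq_Rintegral => w _; rewrite /Vc /= (qcE f) (qcE fstar); ring.
  rewrite RintegralD //; last exact: finite_measure_integrable_cst.
  - by rewrite Rintegral_cst // (_ : fine _ = 1) ?mulr1 //; rewrite -[1]/(fine 1%E); congr fine; apply: probability_setT.
  - exact: ic.
pose al f := (f ^+ 2 - fstar ^+ 2) / (2 * (d + lam)).
pose be f := - (f - fstar) / (d + lam).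
have IbE f : Rintegral P setT (Vb f) = Rintegral P setT (Vb fstar) + (al f + be f * E).
  transitivity (Rintegral P setT (fun w => Vb fstar w + (al f + be f * qa (theta w)))).
    apply: eq_Rintegral => w _; rewrite /Vb /al /be /= !qbE !uE !phiE qaE; by field; rewrite ?dn ?ln ?Kn ?pn.
  have iq : P.-integrable setT (EFin \o (fun w => al f + be f * qa (theta w))).
    apply: (eq_integrable measurableT _ _ _ (integrableD measurableT
       (finite_measure_integrable_cst P (al f) measurableT)
       (integrableZl measurableT (be f) ia))).
    by move=> w _ /=; rewrite EFinD EFinM.
  rewrite RintegralD //; last exact: ib.
  congr (_ + _).
  rewrite RintegralD //; last first.
  - apply: (eq_integrable measurableT _ _ _ (integrableZl measurableT (be f) ia)).
    by move=> w _ /=; rewrite EFinM.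
  - exact: finite_measure_integrable_cst.
  rewrite (RintegralZl _ measurableT ia).
  rewrite Rintegral_cst // (_ : fine _ = 1) ?mulr1 //; rewrite -[1]/(fine 1%E); congr fine; apply: probability_setT.
pose m := E + (d + lam) * (p * pi2 / (1 - p)).
have := Hmin m.
rewrite !HE (IcE m) (IbE m).
have key : p * (Rintegral P setT (Vc fstar) + - (pi2 * (m - fstar))) +
    (1 - p) * (Rintegral P setT (Vb fstar) + (al m + be m * E)) =
    p * Rintegral P setT (Vc fstar) + (1 - p) * Rintegral P setT (Vb fstar)
    - (1 - p) / (2 * (d + lam)) * (fstar - m) ^+ 2.
  rewrite /al /be /m; by field; rewrite ?dn ?ln ?Kn ?pn.
rewrite key -subr_ge0 addrAC subrr add0r oppr_ge0.
have c0 : 0 < (1 - p) / (2 * (d + lam)).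
  by rewrite divr_gt0 ?subr_gt0 // mulr_gt0 // addr_gt0.
rewrite (pmulr_rle0 _ c0) le_eqVlt ltNge sqr_ge0 orbF sqrf_eq0 subr_eq0 => /eqP ->.
rewrite /m /E; ring.
Qed.
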